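(* Let $N$ be a smooth positive function on an open interval of positive $r$-values, let $a$ be a constant such that $F(r)=\int_a^r\frac{1}{N(\mu)}\,\mathrm{d}\mu$ is defined and has a smooth inverse $F^{-1}$ defined on an open interval $I$, and set $b_1(t)=N(F^{-1}(t))$, $b_2(t)=F^{-1}(t)$ for $t\in I$. Consider the $(2+1)$-dimensional Lorentzian multiply warped product $I\times{}_{b_1}F_1\times{}_{b_2}F_2$ with $F_1,F_2$ one-dimensional Riemannian manifolds with coordinates $x,\phi$ and metric $\mathrm{d}s^2=-\mathrm{d}t^2+b_1^2(t)\,\mathrm{d}x^2+b_2^2(t)\,\mathrm{d}\phi^2$. Then this space-time has constant scalar curvature $\tau=\lambda$ if and only if the square lapse function has the form $$N^2(r)=-\frac{c_1}{r}+\frac{\lambda}{6}r^2+c_2$$ for suitable constants $c_1,c_2$.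
   Context: Curvature sign conventions are those of O'Neill's ''Semi-Riemannian geometry'' (so that, e.g., the de Sitter space has positive scalar curvature). *)

(* Defs.v *)
From Stdlib Require Import Reals Lra.
From Coquelicot Require Import Coquelicot.
Open Scope R_scope.

(** * Coordinate (local) semi-Riemannian geometry in dimension 3.
    Points of a coordinate chart are functions [nat -> R] (only indices 0,1,2
    matter); a metric in coordinates is [g : (nat -> R) -> nat -> nat -> R]. *)

Definition sum3 (f : nat -> R) : R := f 0%nat + f 1%nat + f 2%nat.

Definition upd (p : nat -> R) (i : nat) (s : R) : nat -> R :=
  fun j => if Nat.eqb j i then s else p j.

Definition pd (i : nat) (f : (nat -> R) -> R) (p : nat -> R) : R :=
  Derive (fun s => f (upd p i s)) (p i).

Definition nx (i k : nat) : nat := Nat.modulo (i + k) 3.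

(** determinant and inverse of a 3x3 matrix (cofactor / adjugate formula) *)
Definition det3 (m : nat -> nat -> R) : R :=
  sum3 (fun j => m 0%nat j *
    (m 1%nat (nx j 1) * m 2%nat (nx j 2) - m 1%nat (nx j 2) * m 2%nat (nx j 1))).

Definition inv3 (m : nat -> nat -> R) (i j : nat) : R :=
  (m (nx j 1) (nx i 1) * m (nx j 2) (nx i 2)
   - m (nx j 1) (nx i 2) * m (nx j 2) (nx i 1)) / det3 m.

Section Curv.
Variable g : (nat -> R) -> nat -> nat -> R.

Definition ginv (p : nat -> R) (i j : nat) : R := inv3 (g p) i j.

Definition christoffel (k i j : nat) (p : nat -> R) : R :=
  / 2 * sum3 (fun l => ginv p k l *
     (pd i (fun q => g q j l) p + pd j (fun q => g q i l) p
      - pd l (fun q => g q i j) p)).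

(** Ricci tensor R_{ij} (standard sign convention, which agrees with O'Neill's
    for Ricci and scalar curvature: spheres / de Sitter have positive scalar
    curvature) *)
Definition ricci (i j : nat) (p : nat -> R) : R :=
  sum3 (fun k => pd k (christoffel k i j) p - pd j (christoffel k i k) p)
  + sum3 (fun k => sum3 (fun l =>
        christoffel k k l p * christoffel l i j p
      - christoffel k j l p * christoffel l i k p)).

Definition scalar_curvature (p : nat -> R) : R :=
  sum3 (fun i => sum3 (fun j => ginv p i j * ricci i j p)).
End Curv.

Definition in_ointerval (lo hi : Rbar) (x : R) : Prop :=
  Rbar_lt lo x /\ Rbar_lt x hi.

Definition smooth_on (D : R -> Prop) (f : R -> R) : Prop :=
  forall (k : nat) (x : R), D x -> ex_derive_n f k x.

Definition mwp_metric (b1 b2 : R -> R) (p : nat -> R) (i j : nat) : R :=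
  match i, j with
  | 0%nat, 0%nat => -1
  | 1%nat, 1%nat => (b1 (p 0%nat)) ^ 2
  | 2%nat, 2%nat => (b2 (p 0%nat)) ^ 2
  | _, _ => 0
  end.

(* Main.v *)
Require Import Defs.
From Stdlib Require Import Reals Lra Lia FunctionalExtensionality.
From Coquelicot Require Import Coquelicot.
Open Scope R_scope.

Section C.
Variables b1 b2 : R -> R.
Definition Mt (t : R) : nat -> nat -> R := mwp_metric b1 b2 (fun _ => t).
Definition Dd (i : nat) (h : R -> R) (t : R) : R :=
  match i with O => Derive h t | _ => 0 end.

Lemma pd_t i f h p : (forall q, f q = h (q 0%nat)) -> pd i f p = Dd i h (p 0%nat).
Proof.
  intros H. unfold pd. destruct i; simpl.
  - apply Derive_ext; intros s; rewrite H; reflexivity.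
  - rewrite (Derive_ext _ (fun _ => h (p 0%nat))). apply Derive_const.
    intros; rewrite H; reflexivity.
Qed.

Lemma pd_metric i j l p :
  pd i (fun q => mwp_metric b1 b2 q j l) p = Dd i (fun s => Mt s j l) (p 0%nat).
Proof. apply pd_t; reflexivity. Qed.

Definition Ch k i j t := / 2 * sum3 (fun l => inv3 (Mt t) k l *
  (Dd i (fun s => Mt s j l) t + Dd j (fun s => Mt s i l) t - Dd l (fun s => Mt s i j) t)).

Lemma christoffel_t k i j q :
  christoffel (mwp_metric b1 b2) k i j q = Ch k i j (q 0%nat).
Proof.
  unfold christoffel, Ch, ginv, sum3. rewrite !pd_metric. reflexivity.
Qed.

Definition Ric i j t :=
  sum3 (fun k => Dd k (Ch k i j) t - Dd j (Ch k i k) t)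
  + sum3 (fun k => sum3 (fun l => Ch k k l t * Ch l i j t - Ch k j l t * Ch l i k t)).

Lemma ricci_t i j p : ricci (mwp_metric b1 b2) i j p = Ric i j (p 0%nat).
Proof.
  unfold ricci, Ric, sum3.
  rewrite !(pd_t _ _ _ _ (christoffel_t _ _ _)).
  rewrite !christoffel_t. reflexivity.
Qed.

Definition Scal t := sum3 (fun i => sum3 (fun j => inv3 (Mt t) i j * Ric i j t)).

Lemma scal_t p : scalar_curvature (mwp_metric b1 b2) p = Scal (p 0%nat).
Proof.
  unfold scalar_curvature, Scal, sum3. rewrite !ricci_t. reflexivity.
Qed.
End C.

Section D.
Variables b1 b2 : R -> R.
Definition Cf (k i j : nat) (s : R) : R :=
  match k, i, j with
  | O, S O, S O => b1 s * Derive b1 s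
  | O, S (S O), S (S O) => b2 s * Derive b2 s
  | S O, O, S O | S O, S O, O => Derive b1 s / b1 s
  | S (S O), O, S (S O) | S (S O), S (S O), O => Derive b2 s / b2 s
  | _, _, _ => 0 end.

Lemma Dsq f x : ex_derive f x -> Derive (fun s => f s * (f s * 1)) x = 2 * f x * Derive f x.
Proof.
  intros H. rewrite (Derive_ext _ (fun s => f s ^ 2)) by (intros; simpl; ring).
  rewrite Derive_pow by auto. simpl. ring.
Qed.

Lemma Ch_Cf k i j s : (k < 3)%nat -> (i < 3)%nat -> (j < 3)%nat ->
  b1 s <> 0 -> b2 s <> 0 -> ex_derive b1 s -> ex_derive b2 s ->
  Ch b1 b2 k i j s = Cf k i j s.
Proof.
  intros Hk Hi Hj H1 H2 D1 D2.
  destruct k as [|[|[|k]]]; try lia; destruct i as [|[|[|i]]]; try lia;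
  destruct j as [|[|[|j]]]; try lia;
  unfold Ch, Cf, sum3, inv3, det3, sum3, Dd, Mt, mwp_metric; simpl;
  rewrite ?Dsq by auto; rewrite ?Derive_const; field; auto.
Qed.
End D.

Section E.
Variables (b1 b2 : R -> R) (t : R).
Hypothesis HU : locally t (fun s => b1 s <> 0 /\ b2 s <> 0 /\ ex_derive b1 s /\ ex_derive b2 s).
Hypothesis HD1 : ex_derive (Derive b1) t.
Hypothesis HD2 : ex_derive (Derive b2) t.

Lemma Dd_Ch k i j l : (k < 3)%nat -> (i < 3)%nat -> (j < 3)%nat ->
  Dd l (Ch b1 b2 k i j) t = Dd l (Cf b1 b2 k i j) t.
Proof.
  intros. destruct l; simpl; auto.
  apply Derive_ext_loc. eapply filter_imp; [|exact HU].
  intros s [? [? [? ?]]]. apply Ch_Cf; auto.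
Qed.

Lemma Scal_formula : Scal b1 b2 t =
  2 * (Derive (Derive b1) t / b1 t + Derive (Derive b2) t / b2 t
       + Derive b1 t * Derive b2 t / (b1 t * b2 t)).
Proof.
  destruct (locally_singleton _ _ HU) as [H1 [H2 [D1 D2]]].
  unfold Scal, Ric, sum3.
  rewrite !Dd_Ch by lia.
  rewrite !Ch_Cf by (auto; lia).
  unfold Cf, Dd, inv3, det3, Mt, mwp_metric, sum3; simpl.
  rewrite ?Derive_const.
  rewrite ?Derive_mult by auto.
  rewrite ?Derive_div by auto.
  field; auto.
Qed.
End E.


Lemma oint_loc lo hi x : in_ointerval lo hi x -> locally x (in_ointerval lo hi).
Proof.
  intros H. apply (@open_and R_UniformSpace (fun u : R => Rbar_lt lo u) (fun u : R => Rbar_lt u hi)).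
  apply open_Rbar_gt. apply open_Rbar_lt. exact H.
Qed.

Lemma oint_between lo hi x y z : in_ointerval lo hi x -> in_ointerval lo hi y ->
  Rmin x y <= z <= Rmax x y -> in_ointerval lo hi z.
Proof.
  unfold in_ointerval, Rmin, Rmax. intros [H1 H2] [H3 H4] Hz.
  destruct (Rle_dec x y); destruct lo, hi; simpl in *; split; try tauto; lra.
Qed.

Lemma oint_const lo hi a (f : R -> R) : in_ointerval lo hi a ->
  (forall r, in_ointerval lo hi r -> is_derive f r 0) ->
  forall r, in_ointerval lo hi r -> f r = f a.
Proof.
  intros Ha Hd r Hr.
  destruct (Rtotal_order a r) as [Hl|[He|Hl]].
  - symmetry. apply eq_is_derive; auto. intros s Hs. apply Hd.
    apply (oint_between _ _ a r); auto. unfold Rmin, Rmax; destruct (Rle_dec a r); lra.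
  - subst; auto.
  - apply eq_is_derive; auto. intros s Hs. apply Hd.
    apply (oint_between _ _ a r); auto. unfold Rmin, Rmax; destruct (Rle_dec a r); lra.
Qed.

Lemma oint_pos r1 r2 r : Rbar_le (Finite 0) r1 -> in_ointerval r1 r2 r -> 0 < r.
Proof.
  intros H [H1 H2]. destruct r1; simpl in *; try tauto; lra.
Qed.

Section ODE.
Variables (r1 r2 : Rbar) (N : R -> R) (a lambda : R).
Hypothesis Hpos : Rbar_le (Finite 0) r1.
Hypothesis HNs : smooth_on (in_ointerval r1 r2) N.
Hypothesis Ha : in_ointerval r1 r2 a.

Lemma dN r : in_ointerval r1 r2 r -> ex_derive N r.
Proof. intros H. exact (HNs 1%nat r H). Qed.
Lemma ddN r : in_ointerval r1 r2 r -> ex_derive (Derive N) r.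
Proof. intros H. exact (HNs 2%nat r H). Qed.

Definition T r := 2 * (Derive (Derive N) r * N r + Derive N r ^ 2 + 2 * Derive N r * N r / r).

Lemma ode1 : (forall r, in_ointerval r1 r2 r -> T r = lambda) ->
  exists c1 c2, forall r, in_ointerval r1 r2 r -> N r ^ 2 = - c1 / r + lambda / 6 * r ^ 2 + c2.
Proof.
  intros HT.
  set (h := fun r => r^2 * (2 * N r * Derive N r) - lambda * r^3/3).
  assert (Hh : forall r, in_ointerval r1 r2 r -> h r = h a).
  { apply oint_const; auto. intros r Hr.
    assert (rp := oint_pos _ _ _ Hpos Hr). specialize (HT r Hr).
    unfold h, T in *. auto_derive.
    - repeat split; [apply dN | apply ddN]; auto.
    - change (Derive (fun x => N x) r) with (Derive N r).
      change (Derive (fun x => Derive N x) r) with (Derive (Derive N) r).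
      rewrite <- HT. field. lra. }
  exists (h a).
  set (k := fun r => N r ^ 2 + h a / r - lambda * r ^ 2 / 6).
  exists (k a). intros r Hr.
  assert (Hk : k r = k a).
  { revert r Hr. apply (oint_const r1 r2); auto. intros s Hs.
    assert (sp := oint_pos _ _ _ Hpos Hs). specialize (Hh s Hs).
    unfold k. auto_derive.
    - repeat split; [apply dN; auto | lra].
    - change (Derive (fun x => N x) s) with (Derive N s).
      rewrite <- Hh. unfold h. field. lra. }
  rewrite <- Hk. unfold k. assert (rp := oint_pos _ _ _ Hpos Hr). field. lra.
Qed.

Lemma ode2 : (exists c1 c2, forall r, in_ointerval r1 r2 r -> N r ^ 2 = - c1 / r + lambda / 6 * r ^ 2 + c2) ->
  forall r, in_ointerval r1 r2 r -> T r = lambda.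
Proof.
  intros [c1 [c2 Hc]].
  assert (E1 : forall s, in_ointerval r1 r2 s -> 2 * N s * Derive N s = c1 / s ^ 2 + lambda / 3 * s).
  { intros s Hs. assert (sp := oint_pos _ _ _ Hpos Hs).
    assert (Hd : Derive (fun s => N s ^ 2) s = Derive (fun s => - c1 / s + lambda / 6 * s ^ 2 + c2) s).
    { apply Derive_ext_loc. eapply filter_imp; [|apply oint_loc; exact Hs].
      intros; apply Hc; auto. }
    rewrite Derive_pow in Hd by (apply dN; auto).
    rewrite (is_derive_unique (fun s => - c1 / s + lambda / 6 * s ^ 2 + c2) _ (c1 / s ^ 2 + lambda / 3 * s)) in Hd.
    - rewrite <- Hd. simpl. ring.
    - auto_derive; [lra|]. field. lra. }
  intros r Hr. assert (rp := oint_pos _ _ _ Hpos Hr).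
  assert (Hd : Derive (fun s => 2 * N s * Derive N s) r = Derive (fun s => c1 / s ^ 2 + lambda / 3 * s) r).
  { apply Derive_ext_loc. eapply filter_imp; [|apply oint_loc; exact Hr].
    intros; apply E1; auto. }
  rewrite (is_derive_unique (fun s => 2 * N s * Derive N s) _ (2 * (Derive N r * Derive N r + N r * Derive (Derive N) r))) in Hd.
  2:{ auto_derive. - repeat split; [apply dN | apply ddN]; auto.
      - change (Derive (fun x => N x) r) with (Derive N r).
        change (Derive (fun x => Derive N x) r) with (Derive (Derive N) r). ring. }
  rewrite (is_derive_unique (fun s => c1 / s ^ 2 + lambda / 3 * s) _ (- 2 * c1 / r ^ 3 + lambda / 3)) in Hd.
  2:{ auto_derive; [nra|]. field. lra. }
  specialize (E1 r Hr). unfold T.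
  replace (2 * (Derive (Derive N) r * N r + Derive N r ^ 2 + 2 * Derive N r * N r / r))
    with (2 * (Derive N r * Derive N r + N r * Derive (Derive N) r) + 2 * (2 * N r * Derive N r) / r)
    by (field; lra).
  rewrite Hd, E1. field. lra.
Qed.
End ODE.


Section G.
Variables (r1 r2 : Rbar) (i1 i2 : Rbar) (N Finv : R -> R) (a : R).
Hypothesis Hpos_int : Rbar_le (Finite 0) r1.
Hypothesis HNsmooth : smooth_on (in_ointerval r1 r2) N.
Hypothesis HNpos : forall r, in_ointerval r1 r2 r -> 0 < N r.
Hypothesis Ha : in_ointerval r1 r2 a.
Hypothesis HFinv_in : forall t, in_ointerval i1 i2 t -> in_ointerval r1 r2 (Finv t).
Hypothesis HFFinv : forall t, in_ointerval i1 i2 t ->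
             RInt (fun mu => / N mu) a (Finv t) = t.
Hypothesis HFinv_smooth : smooth_on (in_ointerval i1 i2) Finv.

Let J := in_ointerval r1 r2.
Let I := in_ointerval i1 i2.

Lemma f_cont z : J z -> continuous (fun mu => / N mu) z.
Proof.
  intros Hz. apply (@ex_derive_continuous R_AbsRing R_NormedModule). auto_derive.
  split; [apply (dN r1 r2); auto|]. split; [|easy]. specialize (HNpos z Hz). lra.
Qed.

Lemma dFinv t : I t -> is_derive Finv t (N (Finv t)).
Proof.
  intros Ht. assert (Hr := HFinv_in t Ht).
  assert (E : ex_derive Finv t) by exact (HFinv_smooth 1%nat t Ht).
  assert (HF : is_derive (RInt (fun mu => / N mu) a) (Finv t) (/ N (Finv t))).
  { apply (is_derive_RInt (fun mu => / N mu) _ a).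
    - eapply filter_imp; [|apply oint_loc; exact Hr]. intros b Hb.
      apply (@RInt_correct R_CompleteNormedModule). apply (@ex_RInt_continuous R_CompleteNormedModule). intros z Hz.
      apply f_cont. apply (oint_between _ _ a b); auto.
    - apply f_cont; auto. }
  assert (Hc := is_derive_comp _ _ _ _ _ HF (Derive_correct _ _ E)).
  assert (Hid : is_derive (fun x : R => x) t (scal (Derive Finv t) (/ N (Finv t)))).
  { eapply is_derive_ext_loc; [|exact Hc].
    eapply filter_imp; [|apply oint_loc; exact Ht]. intros; apply HFFinv; auto. }
  apply is_derive_unique in Hid. rewrite Derive_id in Hid.
  change (scal (Derive Finv t) (/ N (Finv t))) with (Derive Finv t * / N (Finv t)) in Hid.
  assert (Np := HNpos _ Hr).
  replace (N (Finv t)) with (Derive Finv t).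
  - apply Derive_correct; auto.
  - apply (Rmult_eq_reg_r (/ N (Finv t))). rewrite <- Hid. field. lra.
    apply Rinv_neq_0_compat. lra.
Qed.


Lemma Scal_T t : I t ->
  Scal (fun t => N (Finv t)) (fun t => Finv t) t = T N (Finv t).
Proof.
  intros Ht.
  assert (DF : forall s, I s -> Derive Finv s = N (Finv s)).
  { intros s Hs. apply is_derive_unique, dFinv; auto. }
  assert (EF : forall s, I s -> ex_derive Finv s).
  { intros s Hs. exact (HFinv_smooth 1%nat s Hs). }
  assert (DB1 : forall s, I s -> Derive (fun t => N (Finv t)) s = Derive N (Finv s) * N (Finv s)).
  { intros s Hs. rewrite Derive_comp; [|apply (dN r1 r2); auto|auto]. rewrite DF; auto. ring. }
  assert (Hr := HFinv_in t Ht). assert (rp := oint_pos _ _ _ Hpos_int Hr).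
  assert (Np := HNpos _ Hr).
  rewrite Scal_formula.
  - replace (Derive (Derive (fun t0 : R => Finv t0)) t) with (Derive (fun t => N (Finv t)) t).
    2:{ apply Derive_ext_loc. eapply filter_imp; [|apply oint_loc; exact Ht].
        intros s Hs. symmetry. apply DF; auto. }
    replace (Derive (Derive (fun t0 : R => N (Finv t0))) t) with
      (Derive (fun s => Derive N (Finv s) * N (Finv s)) t).
    2:{ apply Derive_ext_loc. eapply filter_imp; [|apply oint_loc; exact Ht].
        intros s Hs. symmetry. apply DB1; auto. }
    rewrite DB1 by auto.
    rewrite Derive_mult.
    2:{ apply ex_derive_comp; [apply (ddN r1 r2)|]; auto. }
    2:{ apply ex_derive_comp; [apply (dN r1 r2)|]; auto. }
    rewrite (Derive_comp (Derive N) Finv) by (auto; apply (ddN r1 r2); auto).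
    rewrite (Derive_comp N Finv) by (auto; apply (dN r1 r2); auto).
    change (Derive (fun t0 => Finv t0) t) with (Derive Finv t).
    rewrite DF by auto. unfold T. field. lra.
  - eapply filter_imp; [|apply oint_loc; exact Ht]. intros s Hs.
    assert (Hr' := HFinv_in s Hs). specialize (HNpos _ Hr').
    assert (rp' := oint_pos _ _ _ Hpos_int Hr').
    repeat split; try lra.
    + apply ex_derive_comp; [apply (dN r1 r2)|]; auto.
    + apply EF; auto.
  - eapply ex_derive_ext_loc.
    + eapply filter_imp; [|apply oint_loc; exact Ht].
      intros s Hs. symmetry. apply DB1; auto.
    + apply ex_derive_mult; apply ex_derive_comp; auto;
      [apply (ddN r1 r2) | apply (dN r1 r2)]; auto.
  - eapply ex_derive_ext_loc.
    + eapply filter_imp; [|apply oint_loc; exact Ht].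
      intros s Hs. symmetry. apply DF; auto.
    + apply ex_derive_comp; [apply (dN r1 r2)|]; auto.
Qed.
End G.

Theorem proposition6p3
  (r1 r2 : Rbar) (i1 i2 : Rbar) (N Finv : R -> R) (a lambda : R)
  (Hpos_int : Rbar_le (Finite 0) r1)
  (Hint : Rbar_lt r1 r2)
  (HNsmooth : smooth_on (in_ointerval r1 r2) N)
  (HNpos : forall r, in_ointerval r1 r2 r -> 0 < N r)
  (Ha : in_ointerval r1 r2 a)
  (HFinv_in : forall t, in_ointerval i1 i2 t -> in_ointerval r1 r2 (Finv t))
  (HF_in : forall r, in_ointerval r1 r2 r ->
             in_ointerval i1 i2 (RInt (fun mu => / N mu) a r))
  (HFFinv : forall t, in_ointerval i1 i2 t ->
             RInt (fun mu => / N mu) a (Finv t) = t)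
  (HFinvF : forall r, in_ointerval r1 r2 r ->
             Finv (RInt (fun mu => / N mu) a r) = r)
  (HFinv_smooth : smooth_on (in_ointerval i1 i2) Finv) :
  (forall p : nat -> R, in_ointerval i1 i2 (p 0%nat) ->
     scalar_curvature (mwp_metric (fun t => N (Finv t)) (fun t => Finv t)) p
       = lambda)
  <->
  (exists c1 c2 : R, forall r, in_ointerval r1 r2 r ->
     (N r) ^ 2 = - c1 / r + lambda / 6 * r ^ 2 + c2).
Proof.
  split.
  - intros H. apply (ode1 r1 r2 N a lambda); auto. intros r Hr.
    assert (It := HF_in r Hr).
    specialize (H (fun _ => RInt (fun mu => / N mu) a r) It).
    rewrite scal_t in H. cbv beta in H.
    rewrite (Scal_T r1 r2 i1 i2 N Finv a) in H; auto.
    rewrite HFinvF in H; auto.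
  - intros Hc p Hp. rewrite scal_t.
    rewrite (Scal_T r1 r2 i1 i2 N Finv a); auto.
    apply (ode2 r1 r2 N lambda); auto.
Qed.
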